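(* Let $P$ be a domain and $D\ge 2$ an integer. Let $C\subseteq P$ be a comb with root $p$, where $p$ is a boundary pixel of $P$, and suppose that $\mathrm{vdist}(q)=1+|x_q-x_p|+|y_q-y_p|$ for every $q\in C$, where $(x_q,y_q)$ denotes the lower-left corner of pixel $q$. Suppose each pixel of $C\setminus\{p\}$ carries exactly one unit of snow, $p$ carries none, and the snowblower stands on $p$. Let $\Delta=\frac1D\sum_{q\in C\setminus\{p\}}\mathrm{vdist}(q)$. Then in the default model there is a sequence of moves obeying the capacity constraint, in which the snowblower only visits pixels of $C$ and snow is only thrown onto pixels of $C$ or out of $P$, which ends with the snowblower on $p$ and no pixel of $C$ carrying snow, and whose number of moves is at most $4|C\setminus\{p\}|+4\Delta$ if $D\ge4$ and at most $4|C\setminus\{p\}|+2\Delta$ if $D\in\{2,3\}$.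
   Context: A pixel is a closed unit square $[i,i+1]\times[j,j+1]$, $i,j\in\mathbb{Z}$, identified with its lower-left corner $(i,j)$; two pixels are adjacent if they share a side. The domain $P$ is a finite set of pixels whose dual graph $G_P$ (vertex per pixel, edges between adjacent pixels) is connected. A boundary side is a side of a pixel of $P$ not shared with another pixel of $P$; a boundary pixel is a pixel of $P$ with a boundary side. For $q\in P$, $\mathrm{vdist}(q)=1+\min_{b}\mathrm{dist}_{G_P}(q,b)$, the minimum over boundary pixels $b$ of $P$. A (horizontal) comb is a set of pixels of the form $C=\{(x,y): y_0\le y\le y_0+H-1,\ a_y\le x\le c\}$ (a leftward comb) or $C=\{(x,y): y_0\le y\le y_0+H-1,\ c\le x\le a_y\}$ (a rightward comb), for integers $y_0$, $H\ge1$, $c$ and $a_y$ ($a_y\le c$, resp. $a_y\ge c$); its handle is the column $\{(c,y): y_0\le y\le y_0+H-1\}$, its teeth are the rows, and its root is either $(c,y_0)$ or $(c,y_0+H-1)$. A move (default model): the snowblower goes from its pixel $v$ to an adjacent pixel $u\in P$, and upon entering $u$ all snow on $u$ is thrown onto any chosen one of the four pixels adjacent to $u$ (including $v$); if that pixel is not in $P$ the snow disappears, otherwise it is added to the snow there. Capacity constraint: at all times every pixel of $P$ carries at most $D$ units of snow. *)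

(* Defs.v *)
From mathcomp Require Import all_boot all_order all_algebra.
Set Implicit Arguments. Unset Strict Implicit. Unset Printing Implicit Defensive.
Import Order.TTheory GRing.Theory Num.Theory.

(* A pixel [i,i+1]x[j,j+1] is identified with its lower-left corner (i,j). *)
Definition pixel := (int * int)%type.

Definition adj (a b : pixel) : bool :=
  (absz (a.1 - b.1)%R + absz (a.2 - b.2)%R == 1)%N.

Definition nbrs (a : pixel) : seq pixel :=
  [:: (a.1 + 1, a.2); (a.1 - 1, a.2); (a.1, a.2 + 1); (a.1, a.2 - 1)]%R.

Definition connected_dom (P : seq pixel) : Prop :=
  forall a b, a \in P -> b \in P ->
    exists w : seq pixel, [/\ path adj a w, all (mem P) w & last a w = b].

Definition boundary_pixel (P : seq pixel) (q : pixel) : bool :=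
  (q \in P) && has (fun r => r \notin P) (nbrs q).

(* BFS layers: layer P k = pixels q of P with min_b dist_{G_P}(q,b) <= k,
   b ranging over boundary pixels of P *)
Fixpoint layer (P : seq pixel) (k : nat) : seq pixel :=
  match k with
  | 0 => [seq q <- P | boundary_pixel P q]
  | k'.+1 => let L := layer P k' in [seq q <- P | (q \in L) || has (adj q) L]
  end.

(* vdist(q) = 1 + min_b dist_{G_P}(q,b); the minimal distance is the least k
   with q in layer P k (it is < size P for q in a connected P). *)
Definition vdist (P : seq pixel) (q : pixel) : nat :=
  (find (fun k => q \in layer P k) (iota 0 (size P))).+1.

(* membership in the horizontal comb with parameters y0, H, c, a;
   [left] = true for a leftward comb, false for a rightward comb *)
Definition in_comb (left : bool) (y0 : int) (H : nat) (c : int) (a : int -> int)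
  (q : pixel) : bool :=
  [&& (y0 <= q.2)%R, (q.2 <= y0 + H%:Z - 1)%R &
      (if left then (a q.2 <= q.1)%R && (q.1 <= c)%R
       else (c <= q.1)%R && (q.1 <= a q.2)%R)].

Definition is_comb (C : pred pixel) (p : pixel) : Prop :=
  exists (left : bool) (y0 : int) (H : nat) (c : int) (a : int -> int),
    [/\ (0 < H)%N,
        (forall y : int, (y0 <= y)%R -> (y <= y0 + H%:Z - 1)%R ->
           if left then (a y <= c)%R else (c <= a y)%R),
        C =1 in_comb left y0 H c a &
        (p = (c, y0) \/ p = (c, y0 + H%:Z - 1)%R)].

(* state: position of the snowblower and amount of snow on each pixel *)
Definition state := (pixel * (pixel -> nat))%type.

(* a move (u,t): go to u, throw all snow of u onto the pixel t (adjacent to u);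
   if t is not in P the snow disappears *)
Definition move := (pixel * pixel)%type.

Definition step (P : seq pixel) (st : state) (m : move) : state :=
  (m.1, fun x => if x == m.1 then 0%N
                 else if (x == m.2) && (m.2 \in P) then (st.2 x + st.2 m.1)%N
                 else st.2 x).

Definition legal (P : seq pixel) (D : nat) (C : pred pixel) (st : state) (m : move)
  : Prop :=
  [/\ adj st.1 m.1, m.1 \in P, m.2 \in nbrs m.1, C m.1 & C m.2 \/ m.2 \notin P]
  /\ (forall x, x \in P -> ((step P st m).2 x <= D)%N).

Fixpoint valid_run (P : seq pixel) (D : nat) (C : pred pixel) (st : state)
  (ms : seq move) : Prop :=
  match ms with
  | [::] => True
  | m :: ms' => legal P D C st m /\ valid_run P D C (step P st m) ms'
  end.

Definition run (P : seq pixel) (st : state) (ms : seq move) : state :=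
  foldl (step P) st ms.

(* |C \ {p}| and Delta = (1/D) sum_{q in C\{p}} vdist(q), for C contained in P *)
Definition comb_rest_size (P : seq pixel) (C : pred pixel) (p : pixel) : nat :=
  size [seq q <- undup P | C q && (q != p)].

Definition Delta (P : seq pixel) (C : pred pixel) (p : pixel) (D : nat) : rat :=
  ((\sum_(q <- undup P | C q && (q != p)) (vdist P q)%:R) / D%:R)%R.

(* Main.v *)
Require Import Defs.
From mathcomp Require Import all_boot all_order all_algebra.
From mathcomp Require Import zify ring lra.
From Stdlib Require Import Logic.FunctionalExtensionality.
Import Order.TTheory GRing.Theory Num.Theory.
Set Implicit Arguments. Unset Strict Implicit. Unset Printing Implicit Defensive.

Ltac clia := repeat match goal with
  | H : is_true _ |- _ => clear H | H : _ = _ |- _ => clear H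
  | H : forall _, _ |- _ => clear H | H : _ /\ _ |- _ => clear H
  | H : _ \/ _ |- _ => clear H | H : ~ _ |- _ => clear H end; lia.

Lemma adj_sym a b : adj a b = adj b a.
Proof.
rewrite /adj. apply/eqP/eqP; lia.
Qed.

Lemma adj_nbrs a b : adj a b -> b \in nbrs a.
Proof.
case: a b => [a1 a2] [b1 b2]; rewrite /adj /nbrs /= => /eqP H.
rewrite !inE !xpair_eqE.
have : [\/ b1 = (a1 + 1)%R /\ b2 = a2, b1 = (a1 - 1)%R /\ b2 = a2,
          b1 = a1 /\ b2 = (a2 + 1)%R | b1 = a1 /\ b2 = (a2 - 1)%R].
  have : ((b1 = a1 + 1)%R /\ b2 = a2) \/ ((b1 = a1 - 1)%R /\ b2 = a2) \/ 
          (b1 = a1 /\ (b2 = a2 + 1)%R) \/ (b1 = a1 /\ (b2 = a2 - 1)%R) by lia.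
  by case=> [?|[?|[?|?]]]; [apply: Or41|apply: Or42|apply: Or43|apply: Or44].
by case=> [[-> ->]|[-> ->]|[-> ->]|[-> ->]]; rewrite !eqxx ?orbT.
Qed.

Lemma nbrs_neq a b : b \in nbrs a -> b != a.
Proof.
case: a b => [a1 a2] [b1 b2]; rewrite /nbrs !inE.
by case/or4P=> /eqP [-> ->]; apply/negP => /eqP [] => *; lia.
Qed.

Lemma valid_run_cat P D C st a b :
  valid_run P D C st (a ++ b) <-> valid_run P D C st a /\ valid_run P D C (run P st a) b.
Proof.
elim: a st => [|m a IH] st /=; first by split => // [[]].
rewrite IH /run /=; tauto.
Qed.

Lemma run_cat P st a b : run P st (a ++ b) = run P (run P st a) b.
Proof. by rewrite /run foldl_cat. Qed.

Inductive btree := Lf | Nd of pixel & btree & btree.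

Fixpoint nodes t : seq pixel :=
  match t with Lf => [::] | Nd r k s => r :: nodes k ++ nodes s end.

Fixpoint swF (u w : pixel) (t : btree) : seq move :=
  match t with
  | Lf => [::]
  | Nd r k s => (r, u) :: swF r u k ++ (u, w) :: swF u w s
  end.

Fixpoint wf (u : pixel) (t : btree) : bool :=
  match t with Lf => true | Nd r k s => [&& adj u r, wf r k & wf u s] end.

Lemma size_swF u w t : size (swF u w t) = (2 * size (nodes t))%N.
Proof.
elim: t u w => [|r k IHk s IHs] u w //=.
rewrite size_cat /= IHk IHs size_cat; lia.
Qed.

Definition wv (P : seq pixel) (w : pixel) (st : pixel -> nat) := if w \in P then st w else 0%N.

Lemma sweep (P : seq pixel) (D : nat) (C : pred pixel) t : forall u w st,
  uniq (nodes t) -> u \notin nodes t -> w \notin nodes t -> wf u t ->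
  (forall x, x \in nodes t -> C x /\ x \in P) ->
  C u -> u \in P -> w \in nbrs u -> (C w \/ w \notin P) ->
  (forall x, x \in P -> st x <= D)%N ->
  (st u + wv P w st + \sum_(x <- nodes t) st x <= D)%N ->
  valid_run P D C (u, st) (swF u w t) /\
  let st' := run P (u, st) (swF u w t) in
  st'.1 = u /\
   (forall x, x \in nodes t -> st'.2 x = 0%N) /\
   (forall x, x \notin nodes t -> x != u -> x != w -> st'.2 x = st x) /\
   (w \notin P -> st'.2 w = st w) /\
   (st'.2 u <= st u)%N /\
   (st'.2 u + wv P w st'.2 <= st u + wv P w st + \sum_(x <- nodes t) st x)%N /\
   (forall x, x \in P -> st'.2 x <= D)%N.
Proof.
elim: t => [|r k IHk s IHs] u w st.
  move=> _ _ _ _ _ _ _ _ _ Hinv _; split => //=; do 6 (split => //); clia.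
rewrite /= => /andP[Hr]; rewrite cat_uniq => /and3P[Uk Dks Us].
move=> Hu Hw; rewrite !inE !mem_cat !negb_or in Hu Hw.
case/and3P: Hu => uNr uNk uNs; case/and3P: Hw => wNr wNk wNs.
move=> /and3P[aur wfk wfs] Hn Cu Pu wu Cw Hinv.
rewrite big_cons big_cat /= => Hsum.
have [Cr Pr] : C r /\ r \in P by apply: Hn; rewrite inE eqxx.
have Hnk x : x \in nodes k -> C x /\ x \in P by move=> xk; apply: Hn; rewrite inE mem_cat xk orbT.
have Hns x : x \in nodes s -> C x /\ x \in P by move=> xs; apply: Hn; rewrite inE mem_cat xs !orbT.
have rNk : r \notin nodes k by move: Hr; rewrite mem_cat negb_or => /andP[].
have rNs : r \notin nodes s by move: Hr; rewrite mem_cat negb_or => /andP[].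
have ur : u != r := uNr.
have wu' : w != u := nbrs_neq wu.
set st1 := (step P (u, st) (r, u)).2.
have st1E x : st1 x = if x == r then 0%N else if x == u then (st x + st r)%N else st x.
  by rewrite /st1 /step /= Pu andbT.
have Hinv1 : forall x, x \in P -> (st1 x <= D)%N.
  move=> x xP; rewrite st1E; case: eqP => // _; case: eqP => [->|_]; last exact: Hinv.
  move: Hsum; clia.
have sumk1 : \sum_(x <- nodes k) st1 x = \sum_(x <- nodes k) st x.
  apply: eq_big_seq => x xk; rewrite st1E; case: eqP => [E|_]; first by move: rNk; rewrite -E xk.
  by case: eqP => [E|_] //; move: uNk; rewrite -E xk.
have sums1 : \sum_(x <- nodes s) st1 x = \sum_(x <- nodes s) st x.
  apply: eq_big_seq => x xs; rewrite st1E; case: eqP => [E|_]; first by move: rNs; rewrite -E xs.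
  by case: eqP => [E|_] //; move: uNs; rewrite -E xs.
have ru : u \in nbrs r by apply: adj_nbrs; rewrite adj_sym.
have [V2 [P2a [P2b [P2c [P2d [P2e [P2f P2g]]]]]]] := IHk r u st1 Uk rNk uNk wfk Hnk Cr Pr ru (or_introl Cu) Hinv1
   ltac:(rewrite /wv Pu /= sumk1 !st1E eqxx (negbTE ur) eqxx /=; move: Hsum; clia).
set st2 := (run P (r, st1) (swF r u k)).2 in P2a P2b P2c P2d P2e P2f P2g.
set st3 := (step P (r, st2) (u, w)).2.
have st3E x : st3 x = if x == u then 0%N else if (x == w) && (w \in P) then (st2 x + st2 u)%N else st2 x.
  by [].
have st2r : st2 r = 0%N by move: P2e; rewrite st1E eqxx /=; clia.
have st2w : st2 w = st w.
  by rewrite (P2c w wNk wNr wu') st1E (negbTE wNr) (negbTE wu').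
have Hbu : (st2 u <= st u + st r + \sum_(x <- nodes k) st x)%N.
  by move: P2f; rewrite /wv Pu /= st2r sumk1 !st1E eqxx (negbTE ur) eqxx /=; clia.
have Hinv3 : forall x, x \in P -> (st3 x <= D)%N.
  move=> x xP; rewrite st3E; case: eqP => // _.
  case: ifP => [/andP[/eqP -> wP]|_]; last exact: P2g.
  by rewrite st2w; move: Hsum Hbu; rewrite /wv wP /=; clia.
have sums3 : \sum_(x <- nodes s) st3 x = \sum_(x <- nodes s) st x.
  rewrite -sums1; apply: eq_big_seq => x xs; rewrite st3E.
  have xu : x != u by apply/eqP => E; move: uNs; rewrite -E xs.
  have xw : x != w by apply/eqP => E; move: wNs; rewrite -E xs.
  rewrite (negbTE xu) (negbTE xw) /= P2c //.
  - by apply/negP => xk; move: Dks => /hasP; apply; exists x.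
  - by apply/eqP => E; move: rNs; rewrite -E xs.
have Hs3 : (st3 u + wv P w st3 + \sum_(x <- nodes s) st3 x <= D)%N.
  rewrite sums3 st3E eqxx /wv; case: ifP => wP.
    rewrite st3E (negbTE wu') eqxx wP st2w; move: Hsum Hbu; rewrite /wv wP /=; clia.
  move: Hsum; clia.
have [V4 [P4a [P4b [P4c [P4d [P4e [P4f P4g]]]]]]] := IHs u w st3 Us uNs wNs wfs Hns Cu Pu wu Cw Hinv3 Hs3.
split.
  rewrite /=; split.
    split; last exact: Hinv1.
    by split; [exact: aur|exact: Pr|exact: ru|exact: Cr|left].
  apply/valid_run_cat; split; first exact: V2.
  rewrite /=; split; last exact: V4.
  split; last exact: Hinv3.
  rewrite /= P2a; split; [by rewrite adj_sym|exact: Pu|exact: wu|exact: Cu|exact: Cw].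
rewrite /= run_cat /= -/st1 -/st2.
have -> : (run P (r, st1) (swF r u k)) = (r, st2) by rewrite /st2; case: (run _ _ _) P2a => [a b] /= ->.
rewrite -/st3.
set st4 := (run P (u, st3) (swF u w s)).2 in P4a P4b P4c P4d P4e P4f P4g *.
split => //; split.
- move=> x; rewrite inE mem_cat => /orP[/eqP ->|/orP[xk|xs]]; last exact: P4b.
  + have ru' : r != u by rewrite eq_sym.
    have rw' : r != w by rewrite eq_sym.
    by rewrite (P4c r rNs ru' rw') st3E (negbTE ru') (negbTE rw') /= st2r.
  + have xs : x \notin nodes s by apply/negP => xs; move: Dks => /hasP; apply; exists x.
    have xu : x != u by apply/eqP => E; move: uNk; rewrite -E xk.
    have xw : x != w by apply/eqP => E; move: wNk; rewrite -E xk.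
    by rewrite P4c // st3E (negbTE xu) (negbTE xw) P2b.
split.
- move=> x; rewrite inE mem_cat !negb_or => /and3P[xr xk xs] xu xw.
  rewrite P4c // st3E (negbTE xu) (negbTE xw) /= P2c // ?st1E ?(negbTE xr) ?(negbTE xu) //.
split.
- move=> wP; rewrite P4d // st3E (negbTE wu') (negbTE wP) andbF st2w //.
split.
- by move: P4e; rewrite st3E eqxx /= leqn0 => /eqP ->.
split; last exact: P4g.
- move: P4f; rewrite sums3 /wv !st3E eqxx /=; case wP: (w \in P) => /=.
    rewrite (negbTE wu') eqxx /= st2w; move: Hbu; clia.
  move: Hbu; clia.
Qed.


Section Prof.
Variables (H D : nat) (len : nat -> nat).
Hypothesis HD : 0 < D.
Hypothesis Hlen : forall j, j < H -> 0 < len j.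
Hypothesis HH : 0 < H.

Definition hd j := (len j - 1) %% D + 1.
Definition B0 j : nat := (j == 0).
Definition RA (F : nat -> nat) := \sum_(0 <= j < H) (hd j - F j).
Definition mu (F : nat -> nat) := \sum_(0 <= j < H) (len j - F j).
Definition Wr (F : nat -> nat) j := \sum_(F j <= i < len j) (1 + i + j).
Definition W (F : nat -> nat) := \sum_(0 <= j < H) Wr F j.
Definition upd (F : nat -> nat) J (g : nat -> nat) j := if j < J then maxn (F j) (g j) else F j.
Definition St (F : nat -> nat) r := [/\ r < H, (forall j, j < r -> F j = hd j),
   (forall j, r < j -> j < H -> F j = B0 j), B0 r <= F r & F r <= hd r].
Definition GoodA F := exists r, St F r /\ ((forall j, j < H -> F j = B0 j) \/ D %| RA F).
Definition GoodB (F : nat -> nat) := forall j, j < H -> [/\ hd j <= F j, F j <= len j & D %| len j - F j].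
Definition Good F := GoodA F \/ GoodB F.
Definition valid (F : nat -> nat) := (forall j, j < H -> F j <= len j) /\ 0 < F 0.

Lemma hd_ge1 j : 0 < hd j. Proof. by rewrite /hd addn1. Qed.
Lemma hd_leD j : hd j <= D.
Proof. rewrite /hd; have := ltn_pmod (len j - 1) HD; lia. Qed.
Lemma hd_len j : j < H -> hd j <= len j.
Proof. move=> /Hlen; rewrite /hd; have := leq_mod (len j - 1) D; lia. Qed.
Lemma hd_dvd j : j < H -> D %| len j - hd j.
Proof.
move=> /Hlen Hl; rewrite /hd.
have -> : len j - ((len j - 1) %% D + 1) = (len j - 1) %/ D * D.
  have := divn_eq (len j - 1) D.
  move: ((len j - 1) %/ D * D) ((len j - 1) %% D) => a b; clear -Hl; lia.
exact: dvdn_mull.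
Qed.

Lemma sum_split3 (F G K : nat -> nat) :
  (forall j, j < H -> F j <= G j <= K j) ->
  \sum_(0 <= j < H) (K j - F j) = \sum_(0 <= j < H) (K j - G j) + \sum_(0 <= j < H) (G j - F j).
Proof.
move=> Hj; rewrite -big_split /=; apply: eq_big_nat => j /andP[_ /Hj]; lia.
Qed.

Lemma W_split (F G : nat -> nat) :
  (forall j, j < H -> F j <= G j <= len j) ->
  W F = W G + \sum_(0 <= j < H) \sum_(F j <= i < G j) (1 + i + j).
Proof.
move=> Hj; rewrite /W /Wr -big_split /=; apply: eq_big_nat => j /andP[_ /Hj /andP[h1 h2]].
by rewrite addnC -big_cat_nat.
Qed.

Lemma row_lb a b j K : K <= 1 + a + j -> (b - a) * K <= \sum_(a <= i < b) (1 + i + j).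
Proof.
move=> HK; rewrite -sum_nat_const_nat big_nat_cond [X in _ <= X]big_nat_cond.
apply: leq_sum => i /andP[/andP[ai _] _]; lia.
Qed.

Lemma sum_lb (F G : nat -> nat) K :
  (forall j, j < H -> F j < G j -> K <= 1 + F j + j) ->
  K * \sum_(0 <= j < H) (G j - F j) <= \sum_(0 <= j < H) \sum_(F j <= i < G j) (1 + i + j).
Proof.
move=> Hj; rewrite big_distrr /= big_nat_cond [X in _ <= X]big_nat_cond.
apply: leq_sum => j /andP[/andP[_ jH] _].
case: (ltnP (F j) (G j)) => h.
  rewrite mulnC; apply: row_lb; exact: Hj.
by rewrite (_ : G j - F j = 0) ?muln0 //; lia.
Qed.

Lemma sum_upd (F g : nat -> nat) J : J <= H ->
  \sum_(0 <= j < J) (g j - F j) = \sum_(0 <= j < H) (upd F J g j - F j).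
Proof.
move=> JH; rewrite (big_cat_nat (leq0n J) JH) /=.
rewrite [X in _ = _ + X]big_nat_cond [X in _ = _ + X]big1 ?addn0; last first.
  move=> j /andP[/andP[h _] _]; rewrite /upd.
  have -> : (j < J) = false by clear -h; lia.
  by rewrite subnn.
apply: eq_big_nat => j /andP[_ h]; rewrite /upd h; lia.
Qed.

Lemma sum_ind_lt r J : r <= J -> \sum_(0 <= j < J) (j < r : nat) = r.
Proof.
move=> h; rewrite (big_cat_nat (leq0n r) h) /=.
rewrite (@eq_big_nat _ _ _ 0 r _ (fun _ => 1)); last by move=> i /andP[_ ->].
rewrite sum_nat_const_nat big_nat_cond big1 ?addn0; first lia.
move=> i /andP[/andP[hi _] _]; rewrite (_ : (i < r) = false) //; clear -hi; lia.
Qed.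

Lemma RA_split (F G : nat -> nat) :
  (forall j, j < H -> F j <= G j <= hd j) ->
  RA F = RA G + \sum_(0 <= j < H) (G j - F j).
Proof. exact: sum_split3. Qed.

Lemma mu_split (F G : nat -> nat) :
  (forall j, j < H -> F j <= G j <= len j) ->
  mu F = mu G + \sum_(0 <= j < H) (G j - F j).
Proof. exact: sum_split3. Qed.

Definition inc (F : nat -> nat) r j := if j == r then (F j).+1 else F j.

Lemma St_le F r : St F r -> forall j, j < H -> F j <= hd j.
Proof.
case=> rH h1 h2 h3 h4 j jH; case: (ltngtP j r) => h.
- by rewrite h1.
- by rewrite h2 //; have := hd_ge1 j; rewrite /B0; case: (j == 0).
- by rewrite h.
Qed.

Lemma St_ge F r : St F r -> forall j, j < H -> B0 j <= F j.
Proof.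
case=> rH h1 h2 h3 h4 j jH; case: (ltngtP j r) => h.
- by rewrite h1 //; have := hd_ge1 j; rewrite /B0; case: (j == 0).
- by rewrite h2.
- by rewrite h.
Qed.

Lemma St_inc F r : St F r -> 0 < RA F -> exists r', [/\ r <= r', r' <= r.+1 & St (inc F r') r'].
Proof.
move=> S; have S' := S; case: S' => rH h1 h2 h3 h4 RApos.
case: (ltnP (F r) (hd r)) => hr.
  exists r; split => //; split => //.
  - by move=> j jr; rewrite /inc (_ : (j == r) = false) ?h1 //; lia.
  - by move=> j jr jH; rewrite /inc (_ : (j == r) = false) ?h2 //; lia.
  - by rewrite /inc eqxx; lia.
  - by rewrite /inc eqxx; lia.
have Fr : F r = hd r by apply/eqP; rewrite eqn_leq h4.
case: (ltnP r.+1 H) => r1H.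
  exists r.+1; split => //; split => //.
  - move=> j jr; rewrite /inc (_ : (j == r.+1) = false); last lia.
    by case: (ltngtP j r) => h; [rewrite h1|lia|rewrite h].
  - by move=> j jr jH; rewrite /inc (_ : (j == r.+1) = false) ?h2 //; lia.
  - by rewrite /inc eqxx h2 // /B0 /= hd_ge1.
exfalso; move: RApos; rewrite /RA big1_seq //.
move=> j; rewrite mem_index_iota => /andP[_ jH].
case: (ltngtP j r) => h; [rewrite h1 //; lia|lia|by rewrite h Fr subnn].
Qed.

Lemma advance k : forall F r, St F r -> k <= RA F ->
  exists F' r', St F' r' /\ r <= r' /\ (forall j, j < H -> F j <= F' j) /\
    (forall j, j < r \/ H <= j -> F' j = F j) /\
    \sum_(0 <= j < H) (F' j - F j) = k /\
    (0 < k -> 0 < F' r') /\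
    (forall j, j < H -> F j < F' j -> r <= j).
Proof.
elim: k => [|k IH] F r S hk.
  exists F, r; split; first exact: S. split; first done. split; first done.
  split; first done. split; first by rewrite big1 // => j _; rewrite subnn.
  split; first done. by move=> j _; rewrite ltnn.
have [F1 [r1 [S1 [rr1 [Fle1 [Fe1 [Fs1 [_ Fr1]]]]]]]] := IH F r S (ltnW hk).
have le1 := St_le S; have leF1 := St_le S1.
have RA1 : RA F = RA F1 + k.
  by rewrite (RA_split (G := F1)) ?Fs1 // => j jH; rewrite Fle1 // leF1.
have [r2 [r12 r21 S2]] := St_inc S1 (ltac:(clear -RA1 hk; lia) : 0 < RA F1).
have r2H : r2 < H by case: S2.
exists (inc F1 r2), r2; split => //; split; first lia.
split.
- by move=> j jH; apply: leq_trans (Fle1 j jH) _; rewrite /inc; case: (j == r2).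
split.
- move=> j hj; rewrite /inc (_ : (j == r2) = false); [exact: Fe1|lia].
split.
- rewrite -addn1 -Fs1.
  rewrite (big_cat_nat (leq0n r2) (ltnW r2H)) /=.
  rewrite (big_cat_nat (leq0n r2) (ltnW r2H)) /=.
  rewrite (big_ltn r2H) (big_ltn r2H).
  rewrite (@eq_big_nat _ _ _ 0 r2 (fun j => inc F1 r2 j - F j) (fun j => F1 j - F j)); last first.
    by move=> j /andP[_ h]; rewrite /inc (_ : (j == r2) = false) //; lia.
  rewrite (@eq_big_nat _ _ _ r2.+1 H (fun j => inc F1 r2 j - F j) (fun j => F1 j - F j)); last first.
    by move=> j /andP[h _]; rewrite /inc (_ : (j == r2) = false) //; lia.
  rewrite /inc eqxx; have := Fle1 r2 r2H; clear; lia.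
split.
- by move=> _; rewrite /inc eqxx.
- move=> j jH; rewrite /inc; case: eqP => [->|_]; first by lia.
  exact: Fr1.
Qed.


Lemma sum_ge_term (f : nat -> nat) j : j < H -> f j <= \sum_(0 <= i < H) f i.
Proof.
move=> jH; rewrite (big_cat_nat (leq0n j) (ltnW jH)) (big_ltn jH) /=.
move: (\sum_(0 <= i < j) f i) (\sum_(j.+1 <= i < H) f i) => a b; lia.
Qed.

Lemma sum_eq_ind (a : nat) r J : r < J -> \sum_(0 <= j < J) (if j == r then a else 0) = a.
Proof.
move=> rJ; rewrite (big_cat_nat (leq0n r) (ltnW rJ)) (big_ltn rJ) /= eqxx.
rewrite big_nat_cond big1; last by move=> i /andP[/andP[_ h] _]; rewrite (_ : (i == r) = false) //; clear -h; lia.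
rewrite [X in _ + (_ + X)]big_nat_cond big1; last by move=> i /andP[/andP[h _] _]; rewrite (_ : (i == r) = false) //; clear -h; lia.
by rewrite add0n addn0.
Qed.

Lemma St_valid F r : St F r -> valid F.
Proof.
move=> S; have S' := S; case: S' => rH h1 h2 h3 h4; split.
  by move=> j jH; apply: leq_trans (St_le S jH) (hd_len jH).
by have := St_ge S (leq_ltn_trans (leq0n r) rH).
Qed.

Lemma Good_valid F : Good F -> valid F.
Proof.
case=> [[r [S _]]|G]; first exact: St_valid S.
have H0 := HH.
split; first by move=> j /G [].
by case: (G 0 H0) => h _ _; apply: leq_trans (hd_ge1 0) h.
Qed.


Definition StepOK (F : nat -> nat) J (g : nat -> nat) :=
  [/\ 0 < J, J <= H, (forall j, j < J -> 0 < g j /\ g j <= len j),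
      0 < \sum_(0 <= j < J) (g j - F j) /\ \sum_(0 <= j < J) (g j - F j) <= D &
      Good (upd F J g) /\ mu (upd F J g) < mu F /\
      D * (\sum_(0 <= j < J) g j - 1) + 2 * D * mu (upd F J g) + W (upd F J g) <= 2 * D * mu F + W F].

Lemma stepB F : GoodB F -> 0 < mu F -> exists J g, StepOK F J g.
Proof.
move=> G mpos.
have [j0 [j0H hj0]] : exists j0, j0 < H /\ F j0 < len j0.
  case: (boolP [exists j : 'I_H, F j < len j]) => [/existsP [j hj]|/existsPn hn].
    by exists j; split.
  exfalso; move: mpos; rewrite /mu big_nat_cond big1 // => j /andP[/andP[_ jH] _].
  by have := hn (Ordinal jH); rewrite /= -leqNgt -subn_eq0 => /eqP.
case: (G j0 j0H) => hdj0 Flen0 Dd0.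
have DF : D <= len j0 - F j0 by apply: dvdn_leq => //; lia.
set g := fun j => if j < j0 then 1 else F j0 + D.
set F' := fun j => if j == j0 then F j0 + D else F j.
have Fge1 j : j < H -> 0 < F j by move=> jH; case: (G j jH) => h _ _; exact: leq_trans (hd_ge1 j) h.
have updE : upd F j0.+1 g = F'.
  apply: functional_extensionality => j; rewrite /upd /g /F'.
  have hF : j < j0 -> 0 < F j := fun h => Fge1 j (ltn_trans h j0H).
  case: (ltnP j j0.+1) => h1; case: (ltnP j j0) => h2; case: eqP => h3 /=; move: hF h1 h2; (try subst j); clear -h3 || clear -j0; lia.
have FF' : forall j, j < H -> F j <= F' j <= len j.
  move=> j jH; rewrite /F'; case: eqP => [->|_]; first lia.
  by case: (G j jH) => _ -> _; rewrite leqnn.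
have sF' : \sum_(0 <= j < H) (F' j - F j) = D.
  rewrite -(sum_eq_ind D j0H); apply: eq_big_nat => j _; rewrite /F'; case: eqP => [->|_]; lia.
have newE : \sum_(0 <= j < j0.+1) (g j - F j) = D.
  rewrite big_nat_recr //= big_nat_cond big1 /g ?ltnn ?add0n; first lia.
  move=> j /andP[/andP[_ h] _]; rewrite h; have := Fge1 j (ltn_trans h j0H); clear; lia.
have sumg : \sum_(0 <= j < j0.+1) g j = j0 + (F j0 + D).
  rewrite big_nat_recr //= /g ltnn (@eq_big_nat _ _ _ 0 j0 _ (fun _ => 1)).
    by rewrite sum_nat_const_nat subn0 muln1.
  by move=> i /andP[_ ->].
have muE : mu F = mu F' + D by rewrite (mu_split FF') sF'.
have WE : W F' + (1 + F j0 + j0) * D <= W F.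
  rewrite (W_split FF') -sF' leq_add2l; apply: sum_lb => j jH.
  rewrite /F'; case: eqP => [->|_]; first lia.
  by rewrite ltnn.
exists j0.+1, g; split => //.
- move=> j jJ; rewrite /g; case: ifP => h.
    by split => //; exact: Hlen (ltn_trans h j0H).
  have ej : j = j0 by apply/eqP; rewrite eqn_leq -ltnS jJ leqNgt h.
  rewrite ej; split; first by rewrite addn_gt0 HD orbT.
  by move: DF hj0; clear; lia.
- by rewrite newE; split.
- rewrite updE; split.
    right => j jH; rewrite /F'; case: eqP => [->|_]; last exact: G.
    split; first by move: hdj0; clear; lia.
      by move: DF hj0; clear; lia.
    by rewrite subnDA; apply: dvdn_sub.
  split; first lia.
  rewrite sumg muE.
  have hd0 : F j0 <= F j0 by [].
  move: WE; move: (W F) (W F') (mu F') => a b c; clear -HD; nia.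
Qed.


Lemma GoodA_RA0 F : GoodA F -> RA F = 0 -> GoodB F.
Proof.
move=> [r [S _]] R0 j jH.
have le := St_le S jH.
have : hd j - F j <= RA F by apply: (sum_ge_term (fun j => hd j - F j) jH).
rewrite R0 leqn0 subn_eq0 => ge.
have -> : F j = hd j by apply/eqP; rewrite eqn_leq le ge.
by split; [done|exact: hd_len|exact: hd_dvd].
Qed.

Lemma stepA F : GoodA F -> 0 < RA F -> exists J g, StepOK F J g.
Proof.
move=> [r [S ini]] RApos.
set s := if D %| RA F then D else RA F %% D.
have [s0 [sD [sR sdiv]]] : 0 < s /\ s <= D /\ s <= RA F /\ D %| RA F - s.
  rewrite /s; case: ifP => dv.
    have := dvdn_leq RApos dv; split => //; split => //; split => //.
    by apply: dvdn_sub.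
  split; first by rewrite lt0n; move: dv; rewrite /dvdn => ->.
  split; first exact: ltnW (ltn_pmod _ HD).
  split; first exact: leq_mod.
  have := divn_eq (RA F) D; move: (RA F %/ D) (RA F %% D) => q m E.
  by rewrite {1}E addnK dvdn_mull.
have [F' [r' [S' [rr' [FF' [Fe [Fs [Fpos Fr]]]]]]]] := advance S sR.
have r'H : r' < H by case: S'.
have rH : r < H by case: S.
set g := fun j => if j < r then 1 else F' j.
have le' := St_le S'.
have FF'' : forall j, j < H -> F j <= F' j <= len j.
  by move=> j jH; rewrite FF' // (leq_trans (le' j jH) (hd_len jH)).
have Frel j : r < j -> j < H -> F j = B0 j by case: S => _ _ h _ _; exact: h.
have F'rel j : r' < j -> j < H -> F' j = B0 j by case: S' => _ _ h _ _; exact: h.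
have Fhd j : j < r -> F j = hd j by case: S => _ h _ _ _; exact: h.
have F'hd j : j < r' -> F' j = hd j by case: S' => _ h _ _ _; exact: h.
have updE : upd F r'.+1 g = F'.
  apply: functional_extensionality => j; rewrite /upd /g.
  case: (ltnP j r'.+1) => h1.
    case: (ltnP j r) => h2.
      rewrite Fe; last by left.
      by rewrite Fhd //; have := hd_ge1 j; clear; lia.
    by have := FF' j (leq_ltn_trans (h1 : j <= r') r'H); clear; lia.
  case: (ltnP j H) => h3; last by rewrite Fe //; right.
  by rewrite Frel ?F'rel //; clear -h1 rr'; lia.
have newE : \sum_(0 <= j < r'.+1) (g j - F j) = s.
  by rewrite (sum_upd _ _ r'H) updE Fs.
have sumg : \sum_(0 <= j < r'.+1) g j <= r + F r + s.
  have -> : r + F r + s = \sum_(0 <= j < r'.+1)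
       ((j < r : nat) + (if j == r then F r else 0) + (g j - F j)).
    by rewrite !big_split /= sum_ind_lt ?sum_eq_ind ?newE // ?(leq_ltn_trans rr' (ltnSn r')) ?(leq_trans rr' (leqnSn r')).
  rewrite big_nat_cond [X in _ <= X]big_nat_cond; apply: leq_sum => j /andP[/andP[_ jJ] _].
  have jH : j < H by exact: leq_ltn_trans (jJ : j <= r') r'H.
  rewrite /g; case: (ltnP j r) => h /=.
    rewrite (_ : (j == r) = false) /=; [clear; lia|clear -h; lia].
  case: eqP => [E|hne] /=.
    by rewrite E; clear; lia.
  have hj0 : F j = 0 by rewrite Frel //; [rewrite /B0; case: eqP => // E; move: h hne; rewrite E; clear; lia|clear -h hne; lia].
  by rewrite hj0; clear; lia.
have muE : mu F = mu F' + s by rewrite (mu_split FF'') Fs.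
have WE : W F' + (1 + r) * s <= W F.
  rewrite (W_split FF'') -Fs leq_add2l; apply: sum_lb => j jH h.
  by have := Fr j jH h; clear; lia.
have RAE : RA F = RA F' + s.
  by rewrite (RA_split (G := F')) ?Fs // => j jH; rewrite FF' // le'.
have key : D * (\sum_(0 <= j < r'.+1) g j - 1) <= 2 * D * s + (1 + r) * s.
  have Frh : F r <= D := leq_trans (St_le S rH) (hd_leD r).
  case: ini => [ini|dv].
    have rF : r + F r <= 1.
      case: (posnP r) => [r0|rpos].
        by rewrite r0 (ini 0 HH).
      rewrite (ini r rH) /B0 (_ : (r == 0) = false) ?addn0; last by clear -rpos; lia.
      case: (ltnP 1 r) => r1; last by [].
      exfalso; have := Fhd 1 r1; rewrite (ini 1 (ltn_trans r1 rH)) /B0 /=.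
      by have := hd_ge1 1; clear; lia.
    move: sumg rF; move: (\sum_(0 <= j < r'.+1) g j) => X; clear -HD; nia.
  have sD' : s = D by rewrite /s dv.
  move: sumg Frh; rewrite sD'; move: (\sum_(0 <= j < r'.+1) g j) => X; clear; nia.
exists r'.+1, g; split => //.
- move=> j jJ; rewrite /g; case: ifP => h.
    by split => //; exact: Hlen (ltn_trans h rH).
  have jH : j < H by exact: leq_ltn_trans (jJ : j <= r') r'H.
  case: (ltngtP j r') => h'.
  + rewrite F'hd //; split; [exact: hd_ge1|exact: hd_len].
  + by move: jJ h'; clear; lia.
  + rewrite h'; split; first exact: Fpos.
    exact: leq_trans (le' r' r'H) (hd_len r'H).
- by rewrite newE.
- rewrite updE; split.
    left; exists r'; split => //; right.
    by move: sdiv; rewrite RAE addnK.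
  split; first by rewrite muE; lia.
  rewrite muE; move: WE key; move: (W F) (W F') (mu F') (\sum_(0 <= j < r'.+1) g j - 1) => a b c d.
  clear; nia.
Qed.


Lemma step_exists F : Good F -> 0 < mu F -> exists J g, StepOK F J g.
Proof.
move=> [GA|GB] mpos; last exact: stepB.
case: (posnP (RA F)) => R; last exact: stepA.
by apply: stepB => //; apply: GoodA_RA0.
Qed.

Lemma mu0_full F : valid F -> mu F = 0 -> forall j, j < H -> F j = len j.
Proof.
move=> [V _] m0 j jH.
have : len j - F j <= mu F by apply: (sum_ge_term (fun j => len j - F j) jH).
rewrite m0 leqn0 subn_eq0 => h; apply/eqP; by rewrite eqn_leq h V.
Qed.

Lemma Good_init : Good B0.
Proof.
left; exists 0; split; last by left.
split; [exact: HH|by []|by []|by []|exact: hd_ge1].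
Qed.

End Prof.

Section Geo.
Variables (cx ye dx dy : int).
Hypothesis Hdx : dx = 1%R \/ dx = (-1)%R.
Hypothesis Hdy : dy = 1%R \/ dy = (-1)%R.

Definition cell (j i : nat) : pixel := (cx + dx * (i%:Z), ye + dy * (j%:Z))%R.
Definition di (x : pixel) := absz (x.1 - cx)%R.
Definition dj (x : pixel) := absz (x.2 - ye)%R.

Lemma di_cell j i : di (cell j i) = i.
Proof. rewrite /di /cell /=; case: Hdx => ->; lia. Qed.
Lemma dj_cell j i : dj (cell j i) = j.
Proof. rewrite /dj /cell /=; case: Hdy => ->; lia. Qed.

Lemma cell_inj j i j' i' : cell j i = cell j' i' -> j = j' /\ i = i'.
Proof.
move=> E; split; first by rewrite -(dj_cell j i) E dj_cell.
by rewrite -(di_cell j i) E di_cell.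
Qed.

Lemma adj_right j i : adj (cell j i) (cell j i.+1).
Proof. rewrite /adj /cell /=; case: Hdx => ->; apply/eqP; lia. Qed.
Lemma adj_up j : adj (cell j 0) (cell j.+1 0).
Proof. rewrite /adj /cell /=; case: Hdy => ->; apply/eqP; lia. Qed.

Fixpoint chain j i k := match k with 0 => Lf | k'.+1 => Nd (cell j i) (chain j i.+1 k') Lf end.
Fixpoint fcat a b := match a with Lf => b | Nd r k s => Nd r k (fcat s b) end.
Fixpoint spine (g : nat -> nat) j m := match m with
  | 0 => Lf
  | m'.+1 => Nd (cell j 0) (fcat (chain j 1 (g j - 1)) (spine g j.+1 m')) Lf end.
Definition forestS J g := fcat (chain 0 1 (g 0 - 1)) (spine g 1 (J - 1)).

Lemma nodes_fcat a b : nodes (fcat a b) = nodes a ++ nodes b.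
Proof. by elim: a => //= r k _ s IH; rewrite IH catA. Qed.
Lemma wf_fcat u a b : wf u (fcat a b) = wf u a && wf u b.
Proof. by elim: a => //= r k _ s IH; rewrite IH !andbA. Qed.
Lemma nodes_chain j i k : nodes (chain j i k) = map (cell j) (iota i k).
Proof. by elim: k i => //= k IH i; rewrite IH cats0. Qed.
Lemma wf_chain j i k : wf (cell j i) (chain j i.+1 k).
Proof. by elim: k i => //= k IH i; rewrite adj_right IH. Qed.

Definition rowl (g : nat -> nat) j := map (cell j) (iota 0 (g j)).

Lemma nodes_spine g j m : (forall k, j <= k < j + m -> 0 < g k) ->
  nodes (spine g j m) = flatten [seq rowl g k | k <- iota j m].
Proof.
elim: m j => //= m IH j hg.
rewrite nodes_fcat nodes_chain cats0 IH; last by move=> k /andP[h1 h2]; apply: hg; rewrite addnS h2 ltnW.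
have g0 : 0 < g j by apply: hg; rewrite leqnn addnS ltnS leq_addr.
by rewrite /rowl; case: (g j) g0 => //= n _; rewrite subn1.
Qed.

Lemma wf_spine g j m : wf (cell j 0) (spine g j.+1 m).
Proof. by elim: m j => //= m IH j; rewrite adj_up wf_fcat wf_chain IH. Qed.

Definition nodesS J g := map (cell 0) (iota 1 (g 0 - 1)) ++ flatten [seq rowl g k | k <- iota 1 (J - 1)].

Lemma nodes_forestS J g : (forall j, j < J -> 0 < g j) -> nodes (forestS J g) = nodesS J g.
Proof.
move=> hg; rewrite /forestS nodes_fcat nodes_chain nodes_spine // => k /andP[h1 h2].
by apply: hg; move: h1 h2; clear; lia.
Qed.

Lemma wf_forestS J g : wf (cell 0 0) (forestS J g).
Proof. by rewrite /forestS wf_fcat wf_chain wf_spine. Qed.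

Lemma mem_nodesS J g x : 0 < J -> (forall j, j < J -> 0 < g j) ->
  x \in nodesS J g <-> exists j i, [/\ j < J, i < g j, (0 < j) || (0 < i) & x = cell j i].
Proof.
move=> J0 hg; rewrite /nodesS mem_cat; split.
  case/orP => [/mapP[i]|/flatten_mapP[k]]; rewrite mem_iota.
    move=> /andP[h1 h2] ->; exists 0, i; split => //.
    by have := hg 0 J0; move: h1 h2; clear; lia.
  move=> /andP[h1 h2] /mapP[i]; rewrite mem_iota => /andP[_ hi] ->; exists k, i; split => //.
  - by move: h1 h2; clear; lia.
  - by rewrite h1.
move=> [j [i [jJ ig ji ->]]]; apply/orP.
case: (posnP j) => [j0|jpos].
  subst j; left; apply/mapP; exists i; last by [].
  by rewrite mem_iota; move: ji ig; rewrite /=; clear; lia.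
right; apply/flatten_mapP; exists j; first by rewrite mem_iota jpos /=; move: jJ; clear; lia.
by apply/mapP; exists i; rewrite ?mem_iota.
Qed.

Lemma uniq_rowl g j : uniq (rowl g j).
Proof.
rewrite /rowl map_inj_uniq ?iota_uniq // => i i' E.
by rewrite -(di_cell j i) E di_cell.
Qed.

Lemma mem_flat_rows g a m x : x \in flatten [seq rowl g k | k <- iota a m] -> a <= dj x < a + m.
Proof.
case/flatten_mapP => k; rewrite mem_iota => hk /mapP[i _ ->]; by rewrite dj_cell.
Qed.

Lemma uniq_flat_rows g a m : uniq (flatten [seq rowl g k | k <- iota a m]).
Proof.
elim: m a => [|m IH] a //=; rewrite cat_uniq uniq_rowl IH andbT /=.
apply/hasPn => x /mem_flat_rows h; apply/negP => /mapP[i _ E].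
by move: h; rewrite E dj_cell ltnn.
Qed.

Lemma uniq_nodesS J g : uniq (nodesS J g).
Proof.
rewrite /nodesS cat_uniq uniq_flat_rows andbT map_inj_uniq ?iota_uniq; last first.
  by move=> i i' E; rewrite -(di_cell 0 i) E di_cell.
rewrite andTb; apply/hasPn => x /mem_flat_rows h; apply/negP => /mapP[i _ E].
by move: h; rewrite E dj_cell.
Qed.

Lemma size_nodesS J g : 0 < J -> (forall j, j < J -> 0 < g j) ->
  size (nodesS J g) = \sum_(0 <= j < J) g j - 1.
Proof.
move=> J0 hg; rewrite /nodesS size_cat size_map size_iota size_flatten sumnE /shape !big_map.
rewrite (big_ltn J0) /=.
have -> : \sum_(i <- iota 1 (J - 1)) size (rowl g i) = \sum_(1 <= j < J) g j.
  by rewrite /index_iota; apply: eq_bigr => i _; rewrite /rowl size_map size_iota.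
have := hg 0 J0; lia.
Qed.

End Geo.

Lemma cnt_ge a c f : \sum_(a <= i < c) (f <= i : nat) <= c - f.
Proof.
elim: c => [|c IH]; first by rewrite big_geq.
case: (leqP a c) => ac.
  rewrite big_nat_recr //=; move: IH; case: (leqP f c) => h /=; move: h; clear; lia.
by rewrite big_geq.
Qed.

Section Run.
Variables (P : seq pixel) (D : nat) (C : pred pixel) (s0 : pixel -> nat).
Variables (cx ye dx dy : int) (H : nat) (len : nat -> nat) (out : pixel).
Hypothesis Hdx : dx = 1%R \/ dx = (-1)%R.
Hypothesis Hdy : dy = 1%R \/ dy = (-1)%R.
Hypothesis HD : 2 <= D.
Hypothesis HH : 0 < H.
Hypothesis Hlen : forall j, j < H -> 0 < len j.
Local Notation cel := (cell cx ye dx dy).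
Local Notation dj' := (dj ye).
Local Notation di' := (di cx).
Hypothesis HC : forall x, C x <-> exists j i, [/\ j < H, i < len j & x = cel j i].
Hypothesis HCP : forall q, C q -> q \in P.
Hypothesis Hs1 : forall q, C q -> q != cel 0 0 -> s0 q = 1.
Hypothesis Hs0 : s0 (cel 0 0) = 0.
Hypothesis HsD : forall x, x \in P -> s0 x <= D.
Hypothesis Hout : out \in nbrs (cel 0 0).
Hypothesis HoutP : out \notin P.

Definition proc (F : nat -> nat) (x : pixel) :=
  [&& x == cel (dj' x) (di' x), dj' x < H & di' x < F (dj' x)].
Definition stF F x := if proc F x then 0 else s0 x.

Lemma proc_cell F j i : proc F (cel j i) = (j < H) && (i < F j).
Proof. by rewrite /proc dj_cell // di_cell // eqxx. Qed.

Lemma C_cell j i : j < H -> i < len j -> C (cel j i).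
Proof. by move=> jH il; apply/HC; exists j, i. Qed.

Lemma cel_neq0 j i : (0 < j) || (0 < i) -> cel j i != cel 0 0.
Proof.
move=> h; apply/eqP => /cell_inj [] // => j0 i0; move: h; by rewrite j0 i0.
Qed.

Lemma stF_cell F j i : j < H -> i < len j -> (0 < j) || (0 < i) ->
  stF F (cel j i) = (F j <= i : nat).
Proof.
move=> jH il h; rewrite /stF proc_cell jH /=.
case: (ltnP i (F j)) => hi //=.
by rewrite Hs1 ?C_cell ?cel_neq0.
Qed.

Lemma stF_le F x : stF F x <= s0 x.
Proof. by rewrite /stF; case: ifP. Qed.

Lemma proc_out G : (forall j, j < H -> G j <= len j) -> proc G out = false.
Proof.
move=> hG; apply/negP => /and3P[/eqP E h1 h2].
move: HoutP; rewrite HCP //; apply/HC; exists (dj' out), (di' out); split => //.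
exact: leq_trans h2 (hG _ h1).
Qed.

Lemma sum_stF F J g : valid H len F -> 0 < J -> J <= H ->
  (forall j, j < J -> 0 < g j /\ g j <= len j) ->
  \sum_(x <- nodesS cx ye dx dy J g) stF F x <= \sum_(0 <= j < J) (g j - F j).
Proof.
move=> [VF F0] J0 JH hg.
rewrite /nodesS big_cat big_flatten !big_map /= (big_ltn J0).
have [g0 g0l] := hg 0 J0.
apply: leq_add.
  have -> : \sum_(j <- iota 1 (g 0 - 1)) stF F (cel 0 j) = \sum_(1 <= i < g 0) (F 0 <= i : nat).
    rewrite /index_iota; apply: eq_big_seq => i; rewrite mem_iota => /andP[h1 h2].
    rewrite stF_cell //; apply: (leq_trans h2); by rewrite add1n subn1 prednK.
  exact: cnt_ge.
rewrite /index_iota big_seq [X in _ <= X]big_seq; apply: leq_sum => k; rewrite mem_iota => /andP[h1 h2].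
have kJ : k < J by move: h2 J0; clear; lia.
have [gk gkl] := hg k kJ.
rewrite /rowl big_map.
have -> : \sum_(j <- iota 0 (g k)) stF F (cel k j) = \sum_(0 <= i < g k) (F k <= i : nat).
  rewrite /index_iota subn0; apply: eq_big_seq => i; rewrite mem_iota => /andP[_ h3].
  rewrite stF_cell //; first exact: leq_trans kJ JH.
    by apply: (leq_trans h3); rewrite add0n.
  by rewrite h1.
exact: cnt_ge.
Qed.

Lemma stF_P F x : x \in P -> stF F x <= D.
Proof. by move=> xP; apply: leq_trans (stF_le F x) (HsD xP). Qed.

Lemma batch F st J g : valid H len F -> (forall x, st x = stF F x) -> 0 < J -> J <= H ->
  (forall j, j < J -> 0 < g j /\ g j <= len j) -> \sum_(0 <= j < J) (g j - F j) <= D ->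
  valid_run P D C (cel 0 0, st) (swF (cel 0 0) out (forestS cx ye dx dy J g)) /\
  (run P (cel 0 0, st) (swF (cel 0 0) out (forestS cx ye dx dy J g))).1 = cel 0 0 /\
  (forall x, (run P (cel 0 0, st) (swF (cel 0 0) out (forestS cx ye dx dy J g))).2 x = stF (upd F J g) x) /\
  size (swF (cel 0 0) out (forestS cx ye dx dy J g)) = 2 * (\sum_(0 <= j < J) g j - 1).
Proof.
move=> VF stE J0 JH hg hnew.
have [VFl F0] := VF.
have hg0 : forall j, j < J -> 0 < g j by move=> j /hg [].
have NE := nodes_forestS cx ye dx dy hg0.
have memN x : x \in nodes (forestS cx ye dx dy J g) <->
    exists j i, [/\ j < J, i < g j, (0 < j) || (0 < i) & x = cel j i].
  by rewrite NE; apply: mem_nodesS.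
have CN x : x \in nodes (forestS cx ye dx dy J g) -> C x /\ x \in P.
  move=> /memN [j [i [jJ ig _ ->]]].
  have jH : j < H := leq_trans jJ JH.
  have Cx : C (cel j i) by apply: C_cell => //; apply: leq_trans ig (proj2 (hg j jJ)).
  by split => //; apply: HCP.
have C0 : C (cel 0 0) by apply: C_cell => //; apply: Hlen.
have uN : cel 0 0 \notin nodes (forestS cx ye dx dy J g).
  apply/negP => /memN [j [i [_ _ h E]]]; move: (cel_neq0 h); by rewrite -E eqxx.
have wN : out \notin nodes (forestS cx ye dx dy J g).
  by apply/negP => /CN [_ oP]; move: HoutP; rewrite oP.
have st0 : st (cel 0 0) = 0 by rewrite stE /stF proc_cell HH F0.
have Hinv : forall x, x \in P -> st x <= D by move=> x xP; rewrite stE; exact: stF_P.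
have Hsum : st (cel 0 0) + wv P out st + \sum_(x <- nodes (forestS cx ye dx dy J g)) st x <= D.
  rewrite st0 /wv (negbTE HoutP) NE.
  rewrite (eq_bigr (fun x => stF F x)); last by move=> x _; rewrite stE.
  by apply: leq_trans (sum_stF VF J0 JH hg) hnew.
have UN : uniq (nodes (forestS cx ye dx dy J g)) by rewrite NE; apply: uniq_nodesS.
have [V [Pa [Pb [Pc [Pd [Pe [Pf Pg]]]]]]] := sweep UN uN wN
   (wf_forestS cx ye Hdx Hdy J g) CN C0 (HCP C0) Hout (or_intror HoutP) Hinv Hsum.
split; first exact: V. split; first exact: Pa.
split; last by rewrite size_swF NE size_nodesS.
move=> x.
set F' := upd F J g.
have FF' j : F j <= F' j by rewrite /F' /upd; case: ifP => _ //; exact: leq_maxl.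
have F'l j : j < H -> F' j <= len j.
  move=> jH; rewrite /F' /upd; case: ifP => h; last exact: VFl.
  by rewrite geq_max VFl //; exact: (proj2 (hg j h)).
case: (boolP (x \in nodes (forestS cx ye dx dy J g))) => xN.
  rewrite Pb //; move/memN: xN => [j [i [jJ ig _ ->]]].
  by rewrite /stF proc_cell (leq_trans jJ JH) /= /F' /upd jJ (leq_trans ig (leq_maxr _ _)).
case: (eqVneq x (cel 0 0)) => [->|xu].
  move: Pe; rewrite st0 leqn0 => /eqP ->.
  by rewrite /stF proc_cell HH (leq_trans F0 (FF' 0)).
case: (eqVneq x out) => [->|xw].
  by rewrite Pd // stE /stF !proc_out.
rewrite Pc // stE /stF.
have -> : proc F' x = proc F x; last by [].
apply/idP/idP => /and3P[/eqP E h1 h2]; apply/and3P; split => //; try by rewrite -E.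
  move: h2; rewrite /F' /upd; case: ifP => jJ //.
  rewrite leq_max => /orP[//|igj]; exfalso.
  case: (boolP ((0 < dj' x) || (0 < di' x))) => hpos.
    by move/negP: xN; apply; apply/memN; exists (dj' x), (di' x); split.
  move: hpos; rewrite negb_or -!eqn0Ngt => /andP[/eqP a /eqP b].
  by move: xu; rewrite E a b eqxx.
exact: leq_trans h2 (FF' _).
Qed.

Lemma main_ind m : forall F st, mu H len F <= m -> Good H D len F -> (forall x, st x = stF F x) ->
  exists ms, [/\ valid_run P D C (cel 0 0, st) ms, (run P (cel 0 0, st) ms).1 = cel 0 0,
     (forall q, C q -> (run P (cel 0 0, st) ms).2 q = 0) &
     D * size ms <= 2 * (2 * D * mu H len F + W H len F)].
Proof.
have HD1 : 0 < D by apply: leq_trans HD.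
elim: m => [|m IH] F st hm G stE; have VF := Good_valid HD1 Hlen HH G;
  case: (posnP (mu H len F)) => [m0|mpos].
- exists [::]; split => //=; last by rewrite muln0.
  move=> q /HC [j [i [jH il ->]]].
  by rewrite stE /stF proc_cell jH (mu0_full HD1 HH VF m0 jH) il.
- by move: hm mpos; clear; lia.
- exists [::]; split => //=; last by rewrite muln0.
  move=> q /HC [j [i [jH il ->]]].
  by rewrite stE /stF proc_cell jH (mu0_full HD1 HH VF m0 jH) il.
have [J [g [J0 JH hg [hn1 hn2] [G' [mlt key]]]]] := step_exists HD1 Hlen HH G mpos.
have [V1 [Pa1 [Pb1 Ps1]]] := batch VF stE J0 JH hg hn2.
set ms1 := swF (cel 0 0) out (forestS cx ye dx dy J g) in V1 Pa1 Pb1 Ps1.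
set st1 := (run P (cel 0 0, st) ms1).2 in Pb1.
have [ms2 [V2 Pa2 Pb2 Ps2]] := IH (upd F J g) st1 (ltac:(move: hm mlt; clear; lia)) G' Pb1.
have R1 : run P (cel 0 0, st) ms1 = (cel 0 0, st1) by rewrite /st1; case: (run _ _ _) Pa1 => a b /= ->.
exists (ms1 ++ ms2); split.
- by apply/valid_run_cat; rewrite R1.
- by rewrite run_cat R1.
- by move=> q Cq; rewrite run_cat R1; apply: Pb2.
rewrite size_cat Ps1 mulnDr.
move: Ps2 key; move: (\sum_(0 <= j < J) g j - 1) (mu H len (upd F J g)) (W H len (upd F J g)) (mu H len F) (W H len F) (size ms2) => a b c d e f.
clear; nia.
Qed.

End Run.

Lemma final_gen (P : seq pixel) (D : nat) (C : pred pixel) (p : pixel) (s0 : pixel -> nat)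
  (cx ye dx dy : int) (H : nat) (len : nat -> nat) (out : pixel) :
  dx = 1%R \/ dx = (-1)%R -> dy = 1%R \/ dy = (-1)%R -> (2 <= D)%N -> (0 < H)%N ->
  (forall j, j < H -> 0 < len j)%N ->
  (forall x, C x <-> exists j i, [/\ j < H, i < len j & x = cell cx ye dx dy j i]%N) ->
  p = (cx, ye) ->
  (forall q, C q -> q \in P) ->
  out \in nbrs p -> out \notin P ->
  (forall q, C q -> vdist P q = (1 + absz (q.1 - p.1)%R + absz (q.2 - p.2)%R)%N) ->
  (forall q, C q -> q != p -> s0 q = 1%N) ->
  s0 p = 0%N ->
  (forall x, x \in P -> (s0 x <= D)%N) ->
  exists ms : seq move,
    [/\ valid_run P D C (p, s0) ms,
        (run P (p, s0) ms).1 = p,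
        (forall q, C q -> (run P (p, s0) ms).2 q = 0%N),
        ((4 <= D)%N -> ((size ms)%:R <= 4 * (comb_rest_size P C p)%:R
                                         + 4 * Delta P C p D :> rat)%R) &
        ((D <= 3)%N -> ((size ms)%:R <= 4 * (comb_rest_size P C p)%:R
                                         + 2 * Delta P C p D :> rat)%R)].
Proof.
move=> Hdx Hdy HD HH Hlen HC Hp HCP Hout HoutP Hv Hs1 Hs0 HsD.
have pE : p = cell cx ye dx dy 0 0 by rewrite Hp /cell !mulr0 !addr0.
rewrite pE in Hout Hs1 Hs0 *.
have stE : forall x, s0 x = stF s0 cx ye dx dy H (B0) x.
  move=> x; rewrite /stF /proc; case: ifP => // /and3P[/eqP E h1 h2].
  move: h2; rewrite /B0; case: eqP => [dj0|] //= di0.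
  by rewrite E dj0 (_ : di cx x = 0)%N // ?Hs0; move: di0; clear; lia.
have [ms [V Pa Pb Psz]] := main_ind Hdx Hdy HD HH Hlen HC HCP Hs1 HsD Hout HoutP
   (m := mu H len B0) (leqnn _) (Good_init D len HH) stE.
set p0 := cell cx ye dx dy 0 0.
set E := flatten [seq map (cell cx ye dx dy j) (iota (B0 j) (len j - B0 j)) | j <- iota 0 H].
have memE x : (x \in E) = C x && (x != p0).
  apply/idP/idP.
    case/flatten_mapP => j; rewrite mem_iota => /andP[_ jH] /mapP[i]; rewrite mem_iota => /andP[h1 h2] ->.
    have jH' : (j < H)%N by move: jH; clear; lia.
    have Cc : C (cell cx ye dx dy j i).
      apply/HC; exists j, i; split => //; move: h1 h2; clear; lia.
    rewrite Cc /=; apply: cel_neq0 => //.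
    case: (posnP j) => [j0|jpos]; last by rewrite ?jpos.
    by move: h1; rewrite j0 /B0 /= => ->; rewrite ?orbT.
  case/andP => /HC [j [i [jH il ->]]] hne.
  apply/flatten_mapP; exists j; first by rewrite mem_iota /=; move: jH; clear; lia.
  apply/mapP; exists i => //; rewrite mem_iota.
  case: (posnP j) => [j0|jpos].
    move: hne; rewrite /p0 j0 /B0 /=; case: (posnP i) => [->|ipos]; first by rewrite eqxx.
    by move=> _; move: ipos il; rewrite j0; clear; lia.
  by rewrite /B0 (_ : (j == 0) = false) /=; move: jpos il; clear; lia.
have uE : uniq E.
  rewrite /E; elim: H {HH Hlen HC E memE Psz V Pa Pb stE} 0%N => [|m IH] a //=.
  rewrite cat_uniq IH andbT map_inj_uniq ?iota_uniq /=; last first.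
    by move=> i i' Ei; rewrite -(di_cell cx ye Hdx Hdy a i) Ei di_cell.
  apply/hasPn => x /flatten_mapP [k]; rewrite mem_iota => /andP[h1 _] /mapP[i _ ->].
  apply/negP => /mapP[i' _ Ec]; move: (cell_inj Hdx Hdy Ec) => [kE _]; move: h1; rewrite kE; clear; lia.
have PE : perm_eq [seq q <- undup P | C q && (q != p0)] E.
  apply: uniq_perm; [by rewrite filter_uniq ?undup_uniq | exact: uE |].
  move=> x; rewrite mem_filter memE mem_undup; case Cx: (C x) => //=.
  by rewrite (HCP x Cx) andbT.
have sizeE : comb_rest_size P C p0 = mu H len B0.
  rewrite /comb_rest_size (perm_size PE) /E size_flatten sumnE /shape !big_map /mu /index_iota subn0.
  by apply: eq_bigr => j _; rewrite size_map size_iota.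
have sumE : \sum_(q <- undup P | C q && (q != p0)) vdist P q = W H len B0.
  rewrite -big_filter (perm_big _ PE) /E big_flatten !big_map /W /index_iota subn0.
  apply: eq_big_seq => j; rewrite mem_iota => /andP[_ jH0].
  rewrite /Wr /index_iota big_map; apply: eq_big_seq => i; rewrite mem_iota => /andP[h1 h2].
  have jH : (j < H)%N by move: jH0; clear; lia.
  rewrite Hv; last first.
    apply/HC; exists j, i; split => //; move: h1 h2; clear; lia.
  rewrite Hp /=.
  have hi : absz ((cell cx ye dx dy j i).1 - cx) = i := di_cell cx ye Hdx Hdy j i.
  have hj : absz ((cell cx ye dx dy j i).2 - ye) = j := dj_cell cx ye Hdx Hdy j i.
  by rewrite hi hj.
have hD : (0 < D%:R :> rat)%R by rewrite ltr0n; move: HD; clear; lia.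
have main : ((size ms)%:R <= 4 * (comb_rest_size P C p0)%:R + 2 * Delta P C p0 D :> rat)%R.
  rewrite /Delta -natr_sum sumE sizeE.
  have hD' : (D%:R != 0 :> rat)%R by rewrite lt0r_neq0.
  have -> : (4 * (mu H len B0)%:R + 2 * ((W H len B0)%:R / D%:R) =
     (4 * (mu H len B0)%:R * D%:R + 2 * (W H len B0)%:R) / D%:R :> rat)%R by field.
  rewrite ler_pdivlMr //.
  move: Psz; rewrite -(ler_nat rat) !natrM !natrD !natrM.
  move: ((size ms)%:R : rat) ((mu H len B0)%:R : rat) ((W H len B0)%:R : rat) (D%:R : rat) => a b c d.
  move=> h; nra.
have Dge : (0 <= Delta P C p0 D)%R.
  by rewrite /Delta divr_ge0 // ?sumr_ge0 // => i _; rewrite ler0n.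
exists ms; split => //; move=> _; lra.
Qed.

Lemma comb_char (left : bool) (y0 : int) (H : nat) (c : int) (a : int -> int) (ye dy : int) :
  dy = 1%R \/ dy = (-1)%R ->
  (forall y, (y0 <= y)%R -> (y <= y0 + H%:Z - 1)%R -> if left then (a y <= c)%R else (c <= a y)%R) ->
  (forall j : nat, (j < H)%N -> (y0 <= ye + dy * j%:Z)%R /\ (ye + dy * j%:Z <= y0 + H%:Z - 1)%R) ->
  (forall y, (y0 <= y)%R -> (y <= y0 + H%:Z - 1)%R -> (absz (y - ye)%R < H)%N /\ (ye + dy * (absz (y - ye)%R)%:Z)%R = y) ->
  forall x, in_comb left y0 H c a x <-> exists j i, [/\ (j < H)%N, (i < absz (a (ye + dy * j%:Z)%R - c)%R + 1)%N &
     x = cell c ye (if left then -1 else 1)%R dy j i].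
Proof.
move=> Hdy Ha Hrow Hinv [x1 x2]; rewrite /in_comb /=; split.
  case/and3P => h1 h2 h3.
  have [jH ye2] := Hinv x2 h1 h2.
  exists (absz (x2 - ye)%R), (absz (x1 - c)%R); split => //.
    rewrite ye2; have := Ha x2 h1 h2; move: h3; clear Ha; case: left => /andP[h3 h4] h5; clear -h3 h4 h5; lia.
  rewrite /cell ye2; congr (_, _); move: h3; clear Ha; case: left => /andP[h3 h4] /=; clear -h3 h4; lia.
move=> [j [i [jH il E]]]; rewrite /cell in E; case: E => -> ->.
have [r1 r2] := Hrow j jH.
have := Ha _ r1 r2; rewrite r1 r2 /=.
move: il; move: (a (ye + dy * j%:Z)%R) => A il.
clear Ha; case: left => h /=; apply/andP; split; clear -il h; lia.
Qed.

Theorem lemma4 (P : seq pixel) (D : nat) (C : pred pixel) (p : pixel)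
  (s0 : pixel -> nat) :
  connected_dom P ->
  (2 <= D)%N ->
  is_comb C p ->
  (forall q, C q -> q \in P) ->
  boundary_pixel P p ->
  (forall q, C q -> vdist P q = (1 + absz (q.1 - p.1)%R + absz (q.2 - p.2)%R)%N) ->
  (forall q, C q -> q != p -> s0 q = 1%N) ->
  s0 p = 0%N ->
  (forall x, x \in P -> (s0 x <= D)%N) ->
  exists ms : seq move,
    [/\ valid_run P D C (p, s0) ms,
        (run P (p, s0) ms).1 = p,
        (forall q, C q -> (run P (p, s0) ms).2 q = 0%N),
        ((4 <= D)%N -> ((size ms)%:R <= 4 * (comb_rest_size P C p)%:R
                                         + 4 * Delta P C p D :> rat)%R) &
        ((D <= 3)%N -> ((size ms)%:R <= 4 * (comb_rest_size P C p)%:R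
                                         + 2 * Delta P C p D :> rat)%R)].
Proof.
move=> _ HD [left [y0 [H [c [a [HH Ha HCeq Hp]]]]]] HCP Hb Hv Hs1 Hs0 HsD.
case/andP: Hb => pP /hasP [out outN outNP].
have Hdx : ((if left then -1 else 1)%R : int) = 1%R \/ ((if left then -1 else 1)%R : int) = (-1)%R.
  by case: left {Ha HCeq}; [right|left].
case: Hp => Hp.
  apply: (@final_gen P D C p s0 c y0 _ 1%R H (fun j => absz (a (y0 + 1 * j%:Z)%R - c)%R + 1)%N out Hdx) => //.
  - by left.
  - by move=> j _; rewrite addn1.
  - move=> x; rewrite HCeq; apply: comb_char => //.
    + by left.
    + by move=> j jH; split; clear -jH; lia.
    + by move=> y h1 h2; split; clear -h1 h2 HH; lia.
apply: (@final_gen P D C p s0 c (y0 + H%:Z - 1)%R _ (-1)%R H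
   (fun j => absz (a (y0 + H%:Z - 1 + (-1) * j%:Z)%R - c)%R + 1)%N out Hdx) => //.
- by right.
- by move=> j _; rewrite addn1.
- move=> x; rewrite HCeq; apply: comb_char => //.
  + by right.
  + by move=> j jH; split; clear -jH; lia.
  + by move=> y h1 h2; split; clear -h1 h2 HH; lia.
Qed.
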